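(* Let $F\in\mathbb{R}^{n\times n}$, $C\in\mathbb{R}^{m\times n}$, and let $\Sigma\in\mathbb{R}^{m\times m}$ be symmetric positive definite with symmetric square root $\Sigma^{1/2}$. Let $\alpha,\bar v>0$, $\bar\omega=\alpha+\bar v$, $b\in(0,1)$ and $\gamma>0$. Suppose $(\mathcal{P},M)$, with $\mathcal{P}\in\mathbb{R}^{n\times n}$ symmetric and $M\in\mathbb{R}^{n\times m}$, solves $$\min_{\mathcal{P},M}\ -\log\det\mathcal{P}$$ subject to $\mathcal{P}\succ0$, $$\begin{bmatrix} b\mathcal{P} & F^T \mathcal{P} & 0 & 0 & 0 & 0\\ \mathcal{P} F & \mathcal{P} & \mathcal{P} & -M \Sigma^{1/2} & 0 & 0\\ 0 & \mathcal{P} & \tfrac{1-b}{\bar{\omega}}I & 0 & 0 & 0\\ 0 & -\Sigma^{1/2}M^T & 0 & \tfrac{1-b}{\bar{\omega}}I & 0 & 0\\ 0 & 0 & 0 & 0 & I & 0\\ 0 & 0 & 0 & 0 & 0 & I \end{bmatrix}\succeq 0,$$ and $$\begin{bmatrix} \mathcal{P} & 0 & 0 & F^T\mathcal{P} - C^TM^T & C^T\\ 0 & \gamma^2I & 0 & -M^T & I\\ 0 & 0 & \gamma^2I & \mathcal{P} & 0\\ \mathcal{P}F-MC & -M & \mathcal{P} & \mathcal{P} & 0\\ C & I & 0 & 0 & I \end{bmatrix}\succeq 0.$$ Set $L=\mathcal{P}^{-1}M$. Then: (i) every trajectory of $e_{k+1}=Fe_k-L\Sigma^{1/2}\zeta_k+v_k$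 with $e_1=0$ and $\|\zeta_k\|^2\le\alpha$, $\|v_k\|^2\le\bar v$ for all $k$ satisfies $e_k^T\mathcal{P}e_k\le1$; (ii) the $H_\infty$ gain from $(\eta_k^T,v_k^T)^T$ to $r_k=Ce_k+\eta_k$ of the system $e_{k+1}=(F-LC)e_k-L\eta_k+v_k$ is at most $\gamma$; (iii) the ellipsoid $\{e:e^T\mathcal{P}e\le1\}$ has minimal volume among all ellipsoids $\{e:e^T\mathcal{P}'e\le 1\}$ arising from feasible pairs $(\mathcal{P}',M')$ of these constraints.
   Context: The system is the estimation-error dynamics of a Luenberger observer with gain $L$. The normalized residual is $\zeta_k=\Sigma^{-1/2}(Ce_k+\eta_k+\delta_k)$, where $\delta_k$ is a sensor attack. The threshold $\alpha$ is that of a chi-squared detector that alarms when $\|\zeta_k\|^2>\alpha$. The residual covariance $\Sigma$ is treated as a given fixed matrix. The volume of $\{e:e^T\mathcal{P}e\le1\}$ is proportional to $(\det\mathcal{P})^{-1/2}$. *)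

(* Defs.v *)
From HB Require Import structures.
From mathcomp Require Import all_boot all_order all_algebra.
Set Implicit Arguments. Unset Strict Implicit. Unset Printing Implicit Defensive.
Import Order.TTheory GRing.Theory Num.Theory.
Local Open Scope ring_scope.

Section Defs.
Variable R : rcfType.

Definition symmx (k : nat) (A : 'M[R]_k) : Prop := A^T = A.

Definition psd (k : nat) (A : 'M[R]_k) : Prop :=
  symmx A /\ forall x : 'cV[R]_k, 0 <= (x^T *m A *m x) 0 0.

Definition pd (k : nat) (A : 'M[R]_k) : Prop :=
  symmx A /\ forall x : 'cV[R]_k, x != 0 -> 0 < (x^T *m A *m x) 0 0.

Definition sqnorm (k : nat) (x : 'cV[R]_k) : R := (x^T *m x) 0 0.

Definition qform (k : nat) (P : 'M[R]_k) (e : 'cV[R]_k) : R := (e^T *m P *m e) 0 0.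

(* Volume of {e : e^T P e <= 1}, up to the dimension-dependent positive
   constant (volume of the unit ball): (det P)^(-1/2). *)
Definition ellipsoid_vol (k : nat) (P : 'M[R]_k) : R := (Num.sqrt (\det P))^-1.

Definition LMI1 (n m d5 d6 : nat) (F : 'M[R]_n) (Sh : 'M[R]_m)
    (alpha vbar b : R) (P : 'M[R]_n) (M : 'M[R]_(n, m))
    : 'M[R]_(n + (n + (n + (m + (d5 + d6))))) :=
  let c := (1 - b) / (alpha + vbar) in
  col_mx (row_mx (b *: P) (row_mx (F^T *m P) (row_mx 0 (row_mx 0 (row_mx 0 0)))))
 (col_mx (row_mx (P *m F) (row_mx P (row_mx P (row_mx (- (M *m Sh)) (row_mx 0 0)))))
 (col_mx (row_mx 0 (row_mx P (row_mx (c%:M) (row_mx 0 (row_mx 0 0)))))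
 (col_mx (row_mx 0 (row_mx (- (Sh *m M^T)) (row_mx 0 (row_mx (c%:M) (row_mx 0 0)))))
 (col_mx (row_mx 0 (row_mx 0 (row_mx 0 (row_mx 0 (row_mx 1%:M 0)))))
         (row_mx 0 (row_mx 0 (row_mx 0 (row_mx 0 (row_mx 0 1%:M))))))))).

Definition LMI2 (n m : nat) (F : 'M[R]_n) (C : 'M[R]_(m, n)) (gamma : R)
    (P : 'M[R]_n) (M : 'M[R]_(n, m)) : 'M[R]_(n + (m + (n + (n + m)))) :=
  col_mx (row_mx P (row_mx 0 (row_mx 0 (row_mx (F^T *m P - C^T *m M^T) C^T))))
 (col_mx (row_mx 0 (row_mx ((gamma ^+ 2)%:M) (row_mx 0 (row_mx (- M^T) 1%:M))))
 (col_mx (row_mx 0 (row_mx 0 (row_mx ((gamma ^+ 2)%:M) (row_mx P 0))))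
 (col_mx (row_mx (P *m F - M *m C) (row_mx (- M) (row_mx P (row_mx P 0))))
         (row_mx C (row_mx 1%:M (row_mx 0 (row_mx 0 1%:M))))))).

Definition feasible (n m d5 d6 : nat) (F : 'M[R]_n) (C : 'M[R]_(m, n))
    (Sh : 'M[R]_m) (alpha vbar b gamma : R) (P : 'M[R]_n) (M : 'M[R]_(n, m)) : Prop :=
  symmx P /\ pd P /\ psd (LMI1 d5 d6 F Sh alpha vbar b P M)
  /\ psd (LMI2 F C gamma P M).

(* H-infinity (= l2-induced) gain of the discrete-time LTI system
     e_{k+1} = A e_k + B w_k,  r_k = Cr e_k + D w_k,  e_1 = 0
   is at most gamma: for every input sequence and every horizon N,
     sum_{k=1}^N |r_k|^2 <= gamma^2 sum_{k=1}^N |w_k|^2. *)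
Definition hinf_gain_le (n p q : nat) (A : 'M[R]_n) (B : 'M[R]_(n, p))
    (Cr : 'M[R]_(q, n)) (D : 'M[R]_(q, p)) (gamma : R) : Prop :=
  forall (w : nat -> 'cV[R]_p) (e : nat -> 'cV[R]_n),
    e 1%N = 0 ->
    (forall k, (1 <= k)%N -> e k.+1 = A *m e k + B *m w k) ->
    forall N : nat,
      \sum_(1 <= k < N.+1) sqnorm (Cr *m e k + D *m w k)
        <= gamma ^+ 2 * \sum_(1 <= k < N.+1) sqnorm (w k).

End Defs.

(* Main.v *)
Require Import Defs.
From HB Require Import structures.
From mathcomp Require Import all_boot all_order all_algebra.
From mathcomp Require Import ring lra.
Import Order.TTheory GRing.Theory Num.Theory.
Local Open Scope ring_scope.

Section E.
Variable R : rcfType.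
Lemma e00D (p q : nat) (A B : 'M[R]_(p.+1,q.+1)) : (A + B) 0 0 = A 0 0 + B 0 0.
Proof. by rewrite mxE. Qed.
Lemma e00N (p q : nat) (A : 'M[R]_(p.+1,q.+1)) : (- A) 0 0 = - A 0 0.
Proof. by rewrite mxE. Qed.
Lemma e00Z (p q : nat) a (A : 'M[R]_(p.+1,q.+1)) : (a *: A) 0 0 = a * A 0 0.
Proof. by rewrite mxE. Qed.
Lemma e000 (p q : nat) : (0 : 'M[R]_(p.+1,q.+1)) 0 0 = 0.
Proof. by rewrite mxE. Qed.
End E.

Lemma zz (V : zmodType) (a c d : V) : a + (-(a - c + d) + (d - c)) = 0.
Proof. by rewrite opprD opprB [c - a - d + _]addrA subrK addrAC subrr add0r subrr. Qed.

Lemma zz2 (V : zmodType) (a b c : V) : a + (-b + (c - (a - b + c))) = 0.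
Proof. by rewrite !addrA subrr. Qed.

Lemma quad1 (R : rcfType) (n m d5 d6 : nat) (F : 'M[R]_n) (Sh : 'M[R]_m)
  (alpha vbar b : R) (P : 'M[R]_n) (L : 'M[R]_(n, m)) e z vk en :
  P^T = P -> Sh^T = Sh -> P *m en = P *m (F *m e - L *m Sh *m z + vk) ->
  let x := col_mx e (col_mx (-en) (col_mx vk (col_mx z (col_mx (0 : 'cV_d5) (0 : 'cV_d6))))) in
  (x^T *m LMI1 d5 d6 F Sh alpha vbar b P (P *m L) *m x) 0 0 =
  b * (e^T *m P *m e) 0 0 - (en^T *m P *m en) 0 0 + ((1 - b) / (alpha + vbar)) * ((vk^T *m vk) 0 0 + (z^T *m z) 0 0).
Proof.
move=> HP HS Hen x; rewrite /x /LMI1 -mulmxA.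
rewrite !mul_col_mx !mul_row_col !tr_col_mx !mul_row_col.
rewrite !trmx0 ?mul0mx ?mulmx0 ?addr0 ?add0r.
have -> : P *m F *m e + (P *m - en + (P *m vk + - (P *m L *m Sh) *m z)) = 0.
  rewrite mulmxN Hen !mulmxDr !mulmxN !mulNmx !mulmxA.
  exact: zz.
have Hq : en^T *m P *m en = (F *m e - L *m Sh *m z + vk)^T *m P *m en.
  by rewrite -{1}HP -trmx_mul Hen trmx_mul HP.
rewrite Hq mulmx0 ?addr0 ?add0r.
rewrite !mul_scalar_mx !trmx_mul !raddfD !raddfN /= !trmx_mul HP HS.
rewrite ?mulmxDr ?mulmxDl ?mulmxN ?mulNmx ?opprK -?scalemxAl -?scalemxAr ?mulmxA ?mulmxN ?opprK ?mulmxA.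
rewrite !(e00D, e00N, e00Z). set c := (1 - b) / _.
ring.
Qed.

Lemma quad2 (R : rcfType) (n m : nat) (F : 'M[R]_n) (C : 'M[R]_(m, n))
  (gamma : R) (P : 'M[R]_n) (L : 'M[R]_(n, m)) (e vv en : 'cV[R]_n) (eta r : 'cV[R]_m) :
  P^T = P -> P *m en = P *m ((F - L *m C) *m e - L *m eta + vv) -> r = C *m e + eta ->
  let x := col_mx e (col_mx eta (col_mx vv (col_mx (-en) (-r)))) in
  (x^T *m LMI2 F C gamma P (P *m L) *m x) 0 0 =
  (e^T *m P *m e) 0 0 + gamma ^+ 2 * ((eta^T *m eta) 0 0 + (vv^T *m vv) 0 0)
   - (en^T *m P *m en) 0 0 - (r^T *m r) 0 0.
Proof.
move=> HP Hen Hr x; rewrite /x /LMI2 -mulmxA.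
rewrite !mul_col_mx !mul_row_col !tr_col_mx !mul_row_col.
rewrite ?trmx0 ?mul0mx ?mulmx0 ?addr0 ?add0r.
have -> : C *m e + (1%:M *m eta + 1%:M *m - r) = 0 by rewrite !mul_scalar_mx !scale1r Hr addrA subrr.
have -> : (P *m F - P *m L *m C) *m e + (- (P *m L) *m eta + (P *m vv + P *m - en)) = 0.
  rewrite mulmxN Hen !mulmxDr !mulmxN mulNmx !mulmxA mulmxBr !mulmxA mulmxBl.
  exact: zz2.
have Hq : en^T *m P *m en = ((F - L *m C) *m e - L *m eta + vv)^T *m P *m en.
  by rewrite -{1}HP -trmx_mul Hen trmx_mul HP.
rewrite Hq !mulmx0 ?addr0.
have -> : r^T *m r = (C *m e + eta)^T *m r by rewrite -Hr.
rewrite !mul_scalar_mx ?scale1r !trmx_mul !raddfD !raddfN /= !trmx_mul HP.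
rewrite ?raddfD ?raddfN /= ?trmx_mul ?HP.
rewrite ?mulmxDr ?mulmxDl ?mulmxN ?mulNmx ?opprK -?scalemxAl -?scalemxAr ?mulmxA ?mulmxN ?opprK ?mulmxA.
rewrite ?mulmxDr ?mulmxDl ?mulmxBr ?mulmxBl ?mulmxN ?mulNmx ?opprK ?mulmxA.
rewrite !(e00D, e00N, e00Z).
ring.
Qed.

Lemma sq_ge0 {R : rcfType} {n} (x : 'cV[R]_n) : 0 <= (x^T *m x) 0 0.
Proof. rewrite mxE; apply: sumr_ge0 => i _; rewrite mxE; exact: mulr_ge0_le0 || by rewrite -expr2 sqr_ge0. Qed.

Lemma pd_det_neq0 (R : rcfType) n (A : 'M[R]_n) :
  (forall x : 'cV[R]_n, x != 0 -> 0 < (x^T *m A *m x) 0 0) -> \det A != 0.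
Proof.
move=> H; apply/negP => /det0P [v vn0 vA].
have := H v^T; rewrite trmx_eq0 vn0 trmxK vA mul0mx mxE ltxx.
by move=> /(_ isT).
Qed.

Lemma pd_det_gt0 (R : rcfType) n (P : 'M[R]_n) : pd P -> 0 < \det P.
Proof.
case=> _ HP.
pose Q : 'M[{poly R}]_n := \matrix_(i, j) ((P i j)%:P * 'X + ((1%:M : 'M[R]_n) i j)%:P * (1 - 'X)).
have HQ : forall t : R, (\det Q).[t] = \det (t *: P + (1 - t) *: 1%:M).
  move=> t; rewrite -horner_evalE -det_map_mx; congr (\det _).
  apply/matrixP => i j; rewrite !mxE /= horner_evalE.
  by rewrite !hornerE /= mulrC [X in _ + X]mulrC.
have H0 : (\det Q).[0] = 1 by rewrite HQ scale0r add0r subr0 scale1r det1.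
have H1 : (\det Q).[1] = \det P by rewrite HQ subrr scale0r addr0 scale1r.
rewrite ltNge; apply/negP => Hle.
have [t /andP [t0 t1] rt] : exists2 t, 0 <= t <= 1 & root (- \det Q) t.
  apply: poly_ivt; first exact: ler01.
  by rewrite !hornerN H0 H1 oppr_le0 ler01 oppr_ge0 Hle.
have tn0 : t != 0.
  by apply: contraTneq rt => ->; rewrite rootN; apply/rootP/eqP; rewrite H0 oner_neq0.
have t0' : 0 < t by rewrite lt_neqAle eq_sym tn0 t0.
move: rt; rewrite rootN => /rootP; rewrite HQ => /eqP; apply/negP.
apply: pd_det_neq0 => x xn0.
rewrite mulmxDr mulmxDl -!scalemxAr -!scalemxAl mulmx1 !(e00D, e00Z).
have := HP x xn0; have := sq_ge0 x; nra.
Qed.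
Arguments quad1 {R n m d5 d6 F Sh alpha vbar b P L e z vk en}.
Arguments quad2 {R n m F C gamma P L e vv en eta r}.
Arguments pd_det_gt0 {R n P}.

Lemma qform_ge0 (R : rcfType) n (P : 'M[R]_n) x : pd P -> 0 <= qform P x.
Proof.
case=> _ HP; rewrite /qform; have [->|xn0] := eqVneq x 0.
  by rewrite mulmx0 mxE.
exact/ltW/HP.
Qed.

Arguments qform_ge0 {R n P}.

Lemma sqnorm_col (R : rcfType) p q (a : 'cV[R]_p) (c : 'cV[R]_q) :
  sqnorm (col_mx a c) = sqnorm a + sqnorm c.
Proof. by rewrite /sqnorm tr_col_mx mul_row_col e00D. Qed.

Theorem corollary2 (R : rcfType) (n m d5 d6 : nat)
    (F : 'M[R]_n) (C : 'M[R]_(m, n)) (Sigma Sh : 'M[R]_m)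
    (alpha vbar b gamma : R)
    (P : 'M[R]_n) (M : 'M[R]_(n, m)) :
  pd Sigma -> symmx Sh -> Sh *m Sh = Sigma ->
  0 < alpha -> 0 < vbar -> 0 < b -> b < 1 -> 0 < gamma ->
  (* (P, M) solves  min -log det P  over the feasible set *)
  feasible d5 d6 F C Sh alpha vbar b gamma P M ->
  (forall (P' : 'M[R]_n) (M' : 'M[R]_(n, m)),
      feasible d5 d6 F C Sh alpha vbar b gamma P' M' -> \det P' <= \det P) ->
  let L := invmx P *m M in
  (* (i) invariance of the ellipsoid *)
  (forall (zeta : nat -> 'cV[R]_m) (v e : nat -> 'cV[R]_n),
      (forall k, (1 <= k)%N -> sqnorm (zeta k) <= alpha) ->
      (forall k, (1 <= k)%N -> sqnorm (v k) <= vbar) ->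
      e 1%N = 0 ->
      (forall k, (1 <= k)%N -> e k.+1 = F *m e k - L *m Sh *m zeta k + v k) ->
      forall k, (1 <= k)%N -> qform P (e k) <= 1)
  /\
  (* (ii) H-infinity gain from w = (eta; v) to r = C e + eta is at most gamma *)
  hinf_gain_le (F - L *m C) (row_mx (- L) 1%:M) C (row_mx 1%:M 0) gamma
  /\
  (* (iii) minimal volume among ellipsoids from feasible pairs *)
  (forall (P' : 'M[R]_n) (M' : 'M[R]_(n, m)),
      feasible d5 d6 F C Sh alpha vbar b gamma P' M' ->
      ellipsoid_vol P <= ellipsoid_vol P').
Proof.
move=> _ HS _ a0 v0 b0 b1 g0 [HPs [HPd [H1 H2]]] Hopt L.
have dP := pd_det_gt0 HPd.
have Pu : P \in unitmx by rewrite unitmxE unitfE gt_eqF.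
have HM : M = P *m L by rewrite /L mulmxA mulmxV // mul1mx.
rewrite HM in H1 H2.
have HPT : P^T = P := HPs.
have HST : Sh^T = Sh := HS.
split; last split.
- move=> zeta v e Hz Hv e1 Hrec.
  suff H : forall k, qform P (e k.+1) <= 1.
    by case=> // k _; exact: H.
  elim=> [|k IH]; first by rewrite e1 /qform mulmx0 mxE ler01.
  have Hen : P *m e k.+2 = P *m (F *m e k.+1 - L *m Sh *m zeta k.+1 + v k.+1).
    by rewrite Hrec.
  have := H1.2 (col_mx (e k.+1) (col_mx (- e k.+2) (col_mx (v k.+1)
           (col_mx (zeta k.+1) (col_mx (0 : 'cV_d5) (0 : 'cV_d6)))))).
  rewrite (quad1 HPT HST Hen).
  have := Hz k.+1 isT; have := Hv k.+1 isT.
  rewrite /qform /sqnorm in IH *.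
  set c := (1 - b) / (alpha + vbar).
  have c0 : 0 <= c by apply: divr_ge0; lra.
  have cE : c * (alpha + vbar) = 1 - b by rewrite /c mulfVK // gt_eqF //; lra.
  move=> hv hz hq.
  have : c * ((v k.+1)^T *m v k.+1 + (zeta k.+1)^T *m zeta k.+1) 0 0 <= c * (alpha + vbar).
    by rewrite e00D ler_wpM2l // addrC lerD.
  rewrite e00D cE => h; have hb := ler_wpM2l (ltW b0) IH; rewrite mulr1 in hb; move: hq; rewrite addrAC subr_ge0 => hq.
  apply: (le_trans hq); have := lerD hb h; by rewrite addrCA subrr addr0.
- move=> w e e1 Hrec N.
  suff H : \sum_(1 <= k < N.+1) sqnorm (C *m e k + row_mx 1%:M 0 *m w k) + qform P (e N.+1)
           <= gamma ^+ 2 * \sum_(1 <= k < N.+1) sqnorm (w k).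
    have := qform_ge0 (e N.+1) HPd; lra.
  elim: N => [|N IH].
    by rewrite !big_geq // e1 /qform mulmx0 mxE add0r mulr0.
  rewrite big_nat_recr //= [X in _ <= _ * X]big_nat_recr //=.
  set eta := usubmx (w N.+1); set vv := dsubmx (w N.+1).
  have wE : w N.+1 = col_mx eta vv by rewrite vsubmxK.
  have Hen : P *m e N.+2 = P *m ((F - L *m C) *m e N.+1 - L *m eta + vv).
    by rewrite Hrec // wE mul_row_col mulNmx mul_scalar_mx scale1r addrA.
  have Hr : C *m e N.+1 + row_mx 1%:M 0 *m w N.+1 = C *m e N.+1 + eta.
    by rewrite wE mul_row_col mul0mx addr0 mul_scalar_mx scale1r.
  have := H2.2 (col_mx (e N.+1) (col_mx eta (col_mx vv (col_mx (- e N.+2)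
            (- (C *m e N.+1 + row_mx 1%:M 0 *m w N.+1)))))).
  rewrite (quad2 HPT Hen Hr).
  rewrite wE sqnorm_col /sqnorm /qform in IH *.
  rewrite -wE; lra.
- move=> P' M' HF.
  have dP' := pd_det_gt0 HF.2.1.
  have := Hopt _ _ HF => Hd.
  rewrite /ellipsoid_vol lef_pV2; first by rewrite ler_sqrt // ltW.
    by rewrite posrE sqrtr_gt0.
  by rewrite posrE sqrtr_gt0.
Qed.
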